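(* Let $p$ be a binary word of length $l$ with exactly $3$ runs whose second run has size at least $2$. For every $n\ge l$, every $p$-optimal binary word of length $n$ has exactly $3$ runs.
   Context: $c_p(w)$ is the number of occurrences of $p$ as a (not necessarily consecutive) subsequence of $w$. $M_{n,p}=\max\{c_p(w): w\in\{0,1\}^n\}$; a binary word $w$ of length $n$ is $p$-optimal if $c_p(w)=M_{n,p}$. A run is a maximal block of consecutive equal letters; its size is its length. *)

(* Defs.v *)
From mathcomp Require Import all_boot.
Set Implicit Arguments. Unset Strict Implicit. Unset Printing Implicit Defensive.

(* Binary words are sequences of booleans (false = 0, true = 1). *)

(* c_p(w): number of occurrences of p as a (not necessarily consecutive)
   subsequence of w, i.e. the number of index sets of w (encoded as
   selection masks of length |w|) selecting exactly p. *)
Definition occ (p w : seq bool) : nat :=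
  #|[set m : (size w).-tuple bool | mask m w == p]|.

Definition Mnp (n : nat) (p : seq bool) : nat :=
  \max_(w : n.-tuple bool) occ p w.

Definition optimal (p w : seq bool) : Prop := occ p w = Mnp (size w) p.

Fixpoint runs_aux (a : bool) (k : nat) (w : seq bool) : seq nat :=
  match w with
  | [::] => [:: k]
  | b :: w' => if b == a then runs_aux a k.+1 w' else k :: runs_aux b 1 w'
  end.

Definition runs (w : seq bool) : seq nat :=
  match w with
  | [::] => [::]
  | a :: w' => runs_aux a 1 w'
  end.

Definition nruns (w : seq bool) : nat := size (runs w).

Example runs_test : runs [:: true; true; false; false; false; true] = [:: 2; 3; 1].
Proof. by []. Qed.

(* Main.v *)
Require Import Defs.
From mathcomp Require Import all_boot.
From mathcomp Require Import zify.

Fixpoint cnt (p w : seq bool) : nat :=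
  match w with
  | [::] => (p == [::])
  | y :: w' => cnt p w' + (if p is x :: p' then (x == y) * cnt p' w' else 0)
  end.

Lemma card_tcons n (P : pred (n.+1.-tuple bool)) :
  #|[set m | P m]| = #|[set t : n.-tuple bool | P [tuple of true :: t]]|
                   + #|[set t : n.-tuple bool | P [tuple of false :: t]]|.
Proof.
rewrite !cardsE -!sum1_card.
pose h (xt : bool * n.-tuple bool) : n.+1.-tuple bool := [tuple of xt.1 :: xt.2].
rewrite (reindex h) /=; last first.
  exists (fun m : n.+1.-tuple bool => (thead m, [tuple of behead m])).
    move=> [x t] _; rewrite /h; congr pair; by apply: val_inj.
  by move=> m _; rewrite /h /=; apply: val_inj; rewrite /= [in RHS](tuple_eta m).
rewrite -(pair_big_dep predT (fun x (t : n.-tuple bool) => P (h (x, t))) (fun _ _ => 1)) /=.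
by rewrite big_bool.
Qed.

Lemma cnt_nil w : cnt [::] w = 1.
Proof. by elim: w => //= y w ->. Qed.

Lemma occE p w : occ p w = cnt p w.
Proof.
elim: w p => [|y w IH] p.
  rewrite /occ /=.
  case: p => [|x p] /=.
    rewrite (_ : [set m : 0.-tuple bool | mask m [::] == [::]] = setT).
      by rewrite cardsT card_tuple.
    by apply/setP => m; rewrite !inE; case: m => [[]].
  rewrite (_ : [set m : 0.-tuple bool | _] = set0) ?cards0 //.
  by apply/setP => m; rewrite !inE; case: m => [[]].
rewrite /occ /= card_tcons /= addnC.
rewrite -/(occ p w) IH; congr addn.
case: p => [|x p].
  apply/eqP; rewrite cards_eq0; apply/eqP/setP => t; rewrite !inE.
  by [].
rewrite -IH /occ.
case: (eqVneq x y) => [->|nxy] /=; rewrite ?mul1n ?mul0n.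
  by apply: eq_card => t; rewrite !inE eqseq_cons eqxx.
apply/eqP; rewrite cards_eq0; apply/eqP/setP => t; rewrite !inE eqseq_cons.
by rewrite eq_sym (negbTE nxy).
Qed.

Notation Z u := (count_mem false u).
Notation O u := (count_mem true u).

Lemma cnt_nseq c k u : cnt (nseq k c) u = 'C(count_mem c u, k).
Proof.
elim: u k => [|y u IH] k /=; first by case: k.
case: k => [|k]; first by rewrite cnt_nil bin0.
have H1 := IH k.+1; have H2 := IH k; move: H1 H2 => /=.
by clear IH; case: y; case: c => /= -> ->; rewrite ?mul1n ?mul0n ?addn0 ?add0n ?add1n ?binS.
Qed.

Lemma cnt_bound q u : cnt q u <= 'C(Z u, Z q) * 'C(O u, O q).
Proof.
elim: u q => [|y u IH] [|x q] //=.
- by rewrite !bin0 cnt_nil.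
have H1 := IH (x :: q); have H2 := IH q; move: H1 H2 => /=.
case: x; case: y => /= H1 H2; rewrite ?add0n ?add1n ?mul1n ?mul0n ?addn0.
- by rewrite binS mulnDr leq_add.
- by apply: (leq_trans H1); rewrite leq_mul2r leq_bin2l ?orbT.
- by apply: (leq_trans H1); rewrite leq_mul2l leq_bin2l ?orbT.
- by rewrite binS mulnDl leq_add.
Qed.

Lemma nseqS_cat A (c : bool) w : nseq A c ++ c :: w = nseq A.+1 c ++ w.
Proof. by elim: A => //= A ->. Qed.

Lemma moveone A k r w :
  cnt (nseq k false ++ true :: r) (nseq A false ++ true :: w) =
  cnt (nseq k false ++ true :: r) (nseq A false ++ w) + 'C(A, k) * cnt r w.
Proof.
elim: A k => [|A IH] k.
  by case: k => [|k] /=; rewrite ?mul1n ?mul0n ?addn0 // bin0n.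
rewrite /= IH; case: k => [|k] /=.
  by rewrite !mul0n !bin0 !addn0.
rewrite !mul1n (IH k) binS; lia.
Qed.

Lemma cnt_allfalse i r A : cnt (nseq i false ++ true :: r) (nseq A false) = 0.
Proof.
elim: A i => [|A IH] i /=; first by case: i.
by rewrite IH; case: i => [|i] //=; rewrite IH.
Qed.

Fixpoint F (i : nat) (q : seq bool) (A : nat) (w : seq bool) : nat :=
  match w with
  | [::] => 0
  | y :: w' => if y then 'C(A, i) * cnt q w' + F i q A w' else F i q A.+1 w'
  end.

Lemma cntF i q A w : cnt (nseq i false ++ true :: q) (nseq A false ++ w) = F i q A w.
Proof.
elim: w A => [|y w IH] A /=; first by rewrite cats0 cnt_allfalse.
case: y.
  by rewrite moveone IH addnC.
by rewrite nseqS_cat IH.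
Qed.

Definition G i k N := \max_(x < N.+1) ('C(x, i) * 'C(N - x, k)).

Lemma Gge i k x N : x <= N -> 'C(x, i) * 'C(N - x, k) <= G i k N.
Proof.
move=> h.
exact: (@leq_bigmax _ (fun y : 'I_N.+1 => 'C(y, i) * 'C(N - y, k)) (Ordinal (h : x < N.+1))).
Qed.

Lemma Gex i k N : exists2 x, x <= N & G i k N = 'C(x, i) * 'C(N - x, k).
Proof.
rewrite /G; have [x0 ->] := @eq_bigmax _ (fun y : 'I_N.+1 => 'C(y, i) * 'C(N - y, k)) (ltac:(by rewrite card_ord)).
by exists x0; first by rewrite -ltnS ltn_ord.
Qed.

Lemma countq j' k : Z (nseq j' true ++ nseq k false) = k /\ O (nseq j' true ++ nseq k false) = j'.
Proof. by rewrite !count_cat !count_nseq /=; split; lia. Qed.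

Lemma cnt_q_bound j' k w :
  cnt (nseq j' true ++ nseq k false) w <= 'C(Z w, k) * 'C(O w, j').
Proof. by have := cnt_bound (nseq j' true ++ nseq k false) w; case: (countq j' k) => -> ->. Qed.

Lemma Fbound i j' k A w :
  F i (nseq j' true ++ nseq k false) A w <= G i k (A + Z w) * 'C(O w, j'.+1).
Proof.
elim: w A => [|y w IH] A //=.
case: y => /=.
  rewrite add0n add1n binS.
  have hq := cnt_q_bound j' k w.
  have hg : 'C(A, i) * 'C(Z w, k) <= G i k (A + Z w).
    by have := @Gge i k A (A + Z w) (leq_addr _ _); rewrite addKn.
  rewrite mulnDr addnC leq_add //.
  apply: (leq_trans (leq_mul (leqnn 'C(A, i)) hq)).
  by rewrite mulnA leq_mul2r hg orbT.
by rewrite add0n add1n addnS -addSn; apply: IH.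
Qed.

Fixpoint ft (v : seq bool) : bool :=
  if v is y :: v' then (if y then ft v' else true \in v') else false.

Lemma in_O v : true \in v -> 0 < O v.
Proof. by rewrite -has_pred1 has_count. Qed.

Lemma ft_O v : ft v -> 0 < O v.
Proof.
elim: v => [|y v IH] //=; case: y => /=; first by rewrite add1n.
by rewrite add0n => /in_O.
Qed.

Lemma strict v m k : ft v -> m <= O v -> k <= Z v -> 0 < m -> 0 < k ->
  cnt (nseq m true ++ nseq k false) v < 'C(Z v, k) * 'C(O v, m).
Proof.
elim: v m => [|y v IH] m //= hft hm hk m0 k0.
case: m m0 hm => [|m] // _.
case: y hft hk => /= hft hk hm; rewrite ?add0n ?add1n in hk hm *.
  rewrite !mul1n binS mulnDr.
  move: hm; rewrite ltnS => hm.
  case: m hm => [|m] hm.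
    rewrite cnt_nseq bin0 muln1 [X in _ < X]addnC addnC ltn_add2l.
    by apply: (IH 1) => //; apply: ft_O.
  rewrite [X in _ < X]addnC addnC -addSn leq_add //; first by apply: IH.
  exact: (cnt_q_bound m.+2).
rewrite (_ : (true == false) * _ = 0) // addn0.
clear IH; case: k k0 hk => [|k] // _; rewrite ltnS => hk.
apply: (@leq_trans ('C(Z v, k.+1) * 'C(O v, m.+1) + 'C(Z v, k) * 'C(O v, m.+1))).
  rewrite -addn1 leq_add //.
    exact: (cnt_q_bound m.+1 k.+1).
  by rewrite muln_gt0 !bin_gt0 hk hm.
by rewrite binS mulnDl.
Qed.

Lemma Fstrict i j' k A v : ft v -> 0 < G i k (A + Z v) -> j' <= O v -> 0 < j' -> 0 < k ->
  F i (nseq j' true ++ nseq k false) A (true :: v) < G i k (A + Z v) * 'C((O v).+1, j'.+1).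
Proof.
move=> hft hG hj j0 k0 /=.
rewrite binS mulnDr [X in _ < X]addnC -addSn leq_add ?Fbound //.
have hC : 0 < 'C(O v, j') by rewrite bin_gt0.
case: (eqVneq ('C(A, i) * 'C(Z v, k)) 0) => [h0|hn0].
  apply: (@leq_trans 1); last by rewrite muln_gt0 hG hC.
  rewrite ltnS leqn0; apply/eqP.
  apply/eqP; rewrite -leqn0.
  apply: (leq_trans (leq_mul (leqnn 'C(A, i)) (cnt_q_bound j' k v))).
  by rewrite mulnA h0.
have hCA : 0 < 'C(A, i) by move: hn0; case: ('C(A, i)).
have hCZ : 0 < 'C(Z v, k) by move: hn0; case: ('C(Z v, k)) => //; rewrite muln0.
have hs := strict v j' k hft hj (ltac:(by rewrite -bin_gt0)) j0 k0.
apply: (@leq_trans ('C(A, i) * ('C(Z v, k) * 'C(O v, j')))).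
  by rewrite ltn_pmul2l.
rewrite mulnA leq_mul2r; apply/orP; right.
by have := @Gge i k A (A + Z v) (leq_addr _ _); rewrite addKn.
Qed.

Lemma F_zero_start i q m s : 0 < i -> F i q 0 (nseq m true ++ s) = F i q 0 s.
Proof. move=> i0; elim: m => [|m IH] //=; rewrite IH bin0n; case: i i0 {IH} => //. Qed.

Lemma F_allfalse i q A y : F i q A (nseq y false) = 0.
Proof. by elim: y A => [|y IH] A //=. Qed.

Lemma F_alltrue i j' k A m : 0 < k -> F i (nseq j' true ++ nseq k false) A (nseq m true) = 0.
Proof.
move=> k0; elim: m => [|m IH] //=; rewrite IH addn0.
apply/eqP; rewrite muln_eq0; apply/orP; right; rewrite -leqn0.
apply: (leq_trans (cnt_q_bound _ _ _)).
by rewrite count_nseq /= ?mul0n ?muln0 bin0n; case: k k0 {IH}.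
Qed.

Lemma cnt_mono p u w : cnt p w <= cnt p (u ++ w).
Proof. elim: u => [|y u IH] //=; exact: (leq_trans IH (leq_addr _ _)). Qed.

Lemma cnt_cat p1 p2 w1 w2 : cnt p1 w1 * cnt p2 w2 <= cnt (p1 ++ p2) (w1 ++ w2).
Proof.
elim: w1 p1 => [|y w1 IH] [|x p1] //=.
- by rewrite mul1n.
- by rewrite cnt_nil mul1n; exact: (cnt_mono p2 (y :: w1) w2).
rewrite mulnDl; apply: leq_add; first exact: (IH (x :: p1)).
by rewrite -mulnA leq_mul2l IH orbT.
Qed.

Lemma cnt_wit i j k x o y :
  'C(x, i) * 'C(o, j) * 'C(y, k) <=
  cnt (nseq i false ++ nseq j true ++ nseq k false) (nseq x false ++ nseq o true ++ nseq y false).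
Proof.
apply: (leq_trans _ (cnt_cat _ _ _ _)).
rewrite -mulnA leq_mul //.
  by rewrite cnt_nseq count_nseq /= mul1n.
apply: (leq_trans _ (cnt_cat _ _ _ _)).
by rewrite !cnt_nseq !count_nseq /= !mul1n.
Qed.

Lemma ZO w : Z w + O w = size w.
Proof. elim: w => [|[] w IH] //=; rewrite ?add0n ?add1n ?addnS ?addSn IH //. Qed.

Lemma decc (c : bool) w : exists x r, w = nseq x c ++ r /\ (r = [::] \/ exists v, r = ~~ c :: v).
Proof.
elim: w => [|y w [x [r [-> H]]]]; first by exists 0, [::]; split => //; left.
case: (eqVneq y c) => [->|ne].
  by exists x.+1, r.
exists 0, (y :: nseq x c ++ r); split => //; right; exists (nseq x c ++ r).
by congr cons; clear H; move: ne; case: y; case: c.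
Qed.

Lemma allfalse v : true \notin v -> v = nseq (size v) false.
Proof. by elim: v => [|[] v IH] //=; rewrite inE /= => /IH <-. Qed.

Lemma dec2 v : ~~ ft v -> exists a b, v = nseq a true ++ nseq b false.
Proof.
elim: v => [|[] v IH] /=; first by exists 0, 0.
  by move=> /IH [a [b ->]]; exists a.+1, b.
move=> /allfalse ->; by exists 0, (size v).+1.
Qed.

Lemma runs_nseq (c : bool) n s k : runs_aux c k (nseq n c ++ s) = runs_aux c (k + n) s.
Proof. by elim: n k => [|n IH] k /=; rewrite ?addn0 // eqxx IH addnS. Qed.

Lemma runs_switch (c : bool) k s : runs_aux c k (~~ c :: s) = k :: runs_aux (~~ c) 1 s.
Proof. by case: c. Qed.

Lemma runs_aux_size c k s : 0 < size (runs_aux c k s).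
Proof. by elim: s c k => [|y s IH] c k //=; case: ifP. Qed.

Lemma runs_switch' (c : bool) k s : runs_aux (~~ c) k (c :: s) = k :: runs_aux c 1 s.
Proof. by case: c. Qed.

Lemma runs3 (c : bool) x o y : 0 < x -> 0 < o -> 0 < y ->
  runs (nseq x c ++ nseq o (~~ c) ++ nseq y c) = [:: x; o; y].
Proof.
case: x => // x _; case: o => // o _; case: y => // y _.
rewrite /= (runs_nseq c x) (runs_switch c) (runs_nseq (~~ c) o) (runs_switch' c).
by rewrite -(cats0 (nseq y c)) (runs_nseq c y) /= !add1n.
Qed.

Lemma shape3 p : nruns p = 3 ->
  exists a x y z, p = nseq x.+1 a ++ nseq y.+1 (~~ a) ++ nseq z.+1 a.
Proof.
case: p => [|a p1] //; rewrite /nruns /=.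
have [x1 [r1 [-> [->|[p2 ->]]]]] := decc a p1; rewrite runs_nseq //.
rewrite runs_switch /=.
have [x2 [r2 [-> [->|[p3 ->]]]]] := decc (~~ a) p2; rewrite runs_nseq //.
rewrite runs_switch /= negbK.
have [x3 [r3 [-> [->|[p4 ->]]]]] := decc a p3; rewrite runs_nseq.
  by move=> _; exists a, x1, x2, x3; rewrite cats0.
rewrite runs_switch /=.
by have := runs_aux_size (~~ a) 1 p4; case: (runs_aux _ _ _).
Qed.

Lemma core i j' k w : 0 < i -> 0 < j' -> 0 < k ->
  size (nseq i false ++ nseq j'.+1 true ++ nseq k false) <= size w ->
  (forall v, size v = size w ->
     cnt (nseq i false ++ nseq j'.+1 true ++ nseq k false) v <=
     cnt (nseq i false ++ nseq j'.+1 true ++ nseq k false) w) ->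
  exists x o y, [/\ 0 < x, 0 < o, 0 < y & w = nseq x false ++ nseq o true ++ nseq y false].
Proof.
move=> i0 j0 k0 hs hmax.
set p := nseq i false ++ nseq j'.+1 true ++ nseq k false in hs hmax.
set q := nseq j' true ++ nseq k false.
have hpq : p = nseq i false ++ true :: q by [].
have hpos : 0 < cnt p w.
  set d := size w - size p.
  have hv : size (nseq i false ++ nseq (j'.+1 + d) true ++ nseq k false) = size w.
    move: hs; rewrite /d /p !size_cat !size_nseq; lia.
  apply: (leq_trans _ (hmax _ hv)).
  apply: (leq_trans _ (cnt_wit _ _ _ _ _ _)).
  by rewrite !muln_gt0 !bin_gt0 !leqnn leq_addr.
have hF : forall A u, cnt p (nseq A false ++ u) = F i q A u.
  by move=> A u; rewrite hpq cntF.
have hb : cnt p w <= G i k (Z w) * 'C(O w, j'.+1).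
  by have := hF 0 w; rewrite /= => ->; apply: (Fbound i j' k 0 w).
have hG : 0 < G i k (Z w).
  by move: (leq_trans hpos hb); rewrite muln_gt0 => /andP[].
have hO : j'.+1 <= O w.
  by move: (leq_trans hpos hb); rewrite muln_gt0 bin_gt0 => /andP[].
have heq : cnt p w = G i k (Z w) * 'C(O w, j'.+1).
  apply/eqP; rewrite eqn_leq hb /=.
  have [x0 hx0 ->] := Gex i k (Z w).
  have hv : size (nseq x0 false ++ nseq (O w) true ++ nseq (Z w - x0) false) = size w.
    rewrite !size_cat !size_nseq -ZO; lia.
  apply: (leq_trans _ (hmax _ hv)).
  apply: (leq_trans _ (cnt_wit _ _ _ _ _ _)).
  by rewrite mulnAC.
have [x [r [hw [hr|[v hr]]]]] := decc false w; subst r.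
  by move: hO; rewrite hw cats0 count_nseq.
have hZ : Z w = x + Z v by rewrite hw count_cat count_nseq /= mul1n add0n.
have hOw : O w = (O v).+1 by rewrite hw count_cat count_nseq /= mul0n add0n add1n.
have hFw : cnt p w = F i q x (true :: v) by rewrite hw hF.
case hft : (ft v).
  have := Fstrict i j' k x v hft (ltac:(by rewrite -hZ)) (ltac:(by rewrite -ltnS -hOw)) j0 k0.
  by rewrite -hFw -hZ -hOw heq ltnn.
have [a [b hv]] := dec2 v (negbT hft).
subst v.
case: x hw hZ hOw hFw => [|x] hw hZ hOw hFw.
  move: hpos; rewrite hFw.
  by rewrite (F_zero_start i q a.+1 (nseq b false) i0) F_allfalse.
case: b hft hw hZ hOw hFw => [|b] hft hw hZ hOw hFw.
  move: hpos; rewrite hFw cats0.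
  by rewrite (F_alltrue i j' k x.+1 a.+1 k0).
exists x.+1, a.+1, b.+1; split => //.
Qed.

Lemma cnt_neg p w : cnt (map negb p) (map negb w) = cnt p w.
Proof.
elim: w p => [|y w IH] [|x p] //=; rewrite ?IH //.
- by rewrite !cnt_nil.
- by rewrite (IH (x :: p)); case: x; case: y.
Qed.

Lemma opt_max p w : optimal p w -> forall v, size v = size w -> cnt p v <= cnt p w.
Proof.
rewrite /optimal -!occE => hopt v hv.
rewrite hopt /Mnp.
have hv' : size v == size w by rewrite hv.
rewrite -(occE p v).
exact: (@leq_bigmax _ (fun t : (size w).-tuple bool => occ p t) (Tuple hv')).
Qed.

Theorem mainTheorem10 (p : seq bool) :
  nruns p = 3 -> 2 <= nth 0 (runs p) 1 ->
  forall (n : nat), size p <= n ->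
  forall w : seq bool, size w = n -> optimal p w -> nruns w = 3.
Proof.
move=> h3 h2 n hn w hw hopt; subst n.
have [a [x [y [z hp]]]] := shape3 p h3.
have hr := runs3 a x.+1 y.+1 z.+1 (ltn0Sn _) (ltn0Sn _) (ltn0Sn _).
rewrite -hp in hr.
move: h2; rewrite hr /= ltnS => y0.
have hmax := opt_max p w hopt.
case: a hp {hr} => hp.
  set p0 := nseq x.+1 false ++ nseq y.+1 true ++ nseq z.+1 false.
  have hp0 : map negb p = p0 by rewrite hp !map_cat !map_nseq.
  have := @core x.+1 y z.+1 (map negb w) (ltn0Sn _) y0 (ltn0Sn _).
  case.
  - by rewrite -/p0 -hp0 !size_map.
  - move=> v; rewrite size_map => hv.
    rewrite -/p0 -hp0 cnt_neg -{1}(mapK negbK v) cnt_neg.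
    by apply: hmax; rewrite size_map.
  move=> x1 [o [y1 [hx ho hy hw0]]].
  have -> : w = nseq x1 true ++ nseq o (~~ true) ++ nseq y1 true.
    by rewrite -(mapK negbK w) hw0 !map_cat !map_nseq.
  by rewrite /nruns runs3.
have := @core x.+1 y z.+1 w (ltn0Sn _) y0 (ltn0Sn _).
case.
- by rewrite -hp.
- by rewrite -hp.
move=> x1 [o [y1 [hx ho hy ->]]].
by rewrite /nruns (runs3 false).
Qed.
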